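(* Fix an integer $p \geq 3$, put $\lambda=\lambda_p=2\cos(\pi/p)$, $S=\begin{pmatrix}1&\lambda\\0&1\end{pmatrix}$, $T=\begin{pmatrix}0&-1\\1&0\end{pmatrix}$ and $U=ST$. Suppose that $\alpha \in \mathbb{R}\cup\{\infty\}$ and $1 \leq i \leq p-1$. Then $\alpha \in \left[U^{p-i+1}(0), U^{p-i}(0)\right)$ if and only if $TU^{i}(\alpha) \in [0,\infty)$, and $\alpha = U^{p-i+1}(0)$ if and only if $TU^{i}(\alpha)=0$.
   Context: Matrices act on $\mathbb{R}\cup\{\infty\}$ as linear fractional transformations: $\begin{pmatrix}a&b\\c&d\end{pmatrix}(z)=\frac{az+b}{cz+d}$ with the usual conventions for $\infty$. One has $0=U^p(0)<U^{p-1}(0)<\cdots<U^2(0)<U(0)=\infty$, so the intervals are meaningful (with $[x,\infty)$ understood for the interval whose right endpoint is $U(0)=\infty$). *)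

(* Defs.v *)
From Stdlib Require Import Reals Lra.
Open Scope R_scope.

Inductive PR : Type := Fin (r : R) | Inf.

(** 2x2 real matrices [[a b];[c d]]. *)
Record Mat2 : Type := mkMat2 { ma : R; mb : R; mc : R; md : R }.

Definition mmul (X Y : Mat2) : Mat2 :=
  mkMat2 (ma X * ma Y + mb X * mc Y) (ma X * mb Y + mb X * md Y)
         (mc X * ma Y + md X * mc Y) (mc X * mb Y + md X * md Y).

Definition mid : Mat2 := mkMat2 1 0 0 1.

Fixpoint mpow (X : Mat2) (n : nat) : Mat2 :=
  match n with O => mid | S k => mmul X (mpow X k) end.

Definition act (X : Mat2) (z : PR) : PR :=
  match z with
  | Fin x =>
      let den := mc X * x + md X in
      if Req_EM_T den 0 then Inf else Fin ((ma X * x + mb X) / den)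
  | Inf =>
      if Req_EM_T (mc X) 0 then Inf else Fin (ma X / mc X)
  end.

(** Half-open interval [a, b) in R ∪ {∞}: its elements are real numbers r
    with a <= r and r < b, where b = ∞ means no upper constraint
    (so [x, ∞) is the real half-line, not containing ∞). *)
Definition in_Ico (a b z : PR) : Prop :=
  match a, z with
  | Fin ra, Fin r =>
      ra <= r /\ match b with Fin rb => r < rb | Inf => True end
  | _, _ => False
  end.

Definition lam (p : nat) : R := 2 * cos (PI / INR p).
Definition Smat (p : nat) : Mat2 := mkMat2 1 (lam p) 0 1.
Definition Tmat : Mat2 := mkMat2 0 (-1) 1 0.
Definition Umat (p : nat) : Mat2 := mmul (Smat p) Tmat.

(* Main.v *)
Require Import Defs.
From Stdlib Require Import Reals Lra Lia.
Open Scope R_scope.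

Definition th (p : nat) := PI / INR p.
Definition sn (p : nat) (x : R) := sin (x * th p).

Lemma INR_p_pos p : (3 <= p)%nat -> 3 <= INR p.
Proof. intro H. apply le_INR in H. simpl in H. lra. Qed.

Lemma th_pos p : (3 <= p)%nat -> 0 < th p.
Proof. intro H. pose proof (INR_p_pos p H). unfold th.
  apply Rdiv_lt_0_compat; [apply PI_RGT_0 | lra]. Qed.

Lemma th_mul p : (3 <= p)%nat -> INR p * th p = PI.
Proof. intro H. pose proof (INR_p_pos p H). unfold th. field. lra. Qed.

Lemma sn_pos p x : (3 <= p)%nat -> 0 < x -> x < INR p -> 0 < sn p x.
Proof. intros H H1 H2. pose proof (th_pos p H). pose proof (th_mul p H).
  unfold sn. apply sin_gt_0. nra. rewrite <- H3. nra. Qed.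

Lemma sn_refl p x : (3 <= p)%nat -> sn p (INR p - x) = sn p x.
Proof. intro H. unfold sn. replace ((INR p - x) * th p) with (PI - x * th p).
  apply sin_PI_x. rewrite <- (th_mul p H). ring. Qed.

Lemma sn_rec p x : sn p (x + 1) + sn p (x - 1) = 2 * cos (th p) * sn p x.
Proof. unfold sn. replace ((x+1) * th p) with (x * th p + th p) by ring.
  replace ((x-1) * th p) with (x * th p - th p) by ring.
  rewrite sin_plus, sin_minus. ring. Qed.

Lemma sn_prod p x : sn p (x + 1) * sn p (x - 1) = sn p x ^ 2 - sn p 1 ^ 2.
Proof. unfold sn. replace ((x+1) * th p) with (x * th p + th p) by ring.
  replace ((x-1) * th p) with (x * th p - th p) by ring.
  replace (1 * th p) with (th p) by ring.
  rewrite sin_plus, sin_minus.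
  pose proof (sin2_cos2 (x * th p)). pose proof (sin2_cos2 (th p)).
  unfold Rsqr in *. nra. Qed.

Lemma mpow_U p k : (3 <= p)%nat ->
  ma (mpow (Umat p) k) = sn p (INR k + 1) / sn p 1 /\
  mb (mpow (Umat p) k) = - sn p (INR k) / sn p 1 /\
  mc (mpow (Umat p) k) = sn p (INR k) / sn p 1 /\
  md (mpow (Umat p) k) = - sn p (INR k - 1) / sn p 1.
Proof.
  intro H. assert (Hs : 0 < sn p 1) by (apply sn_pos; [exact H|lra|pose proof (INR_p_pos p H); lra]).
  induction k as [|k IH].
  - simpl. replace (0 + 1) with 1 by ring. replace (0 - 1) with (- 1) by ring.
    unfold sn. replace (0 * th p) with 0 by ring. rewrite sin_0.
    replace (-1 * th p) with (- (1 * th p)) by ring. rewrite sin_neg.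
    fold (sn p 1). repeat split; try field; lra.
  - destruct IH as [Ha [Hb [Hc Hd]]].
    rewrite S_INR. simpl mpow. set (X := mpow (Umat p) k) in *. unfold mmul at 1. cbn [ma mb mc md]. unfold Umat, Smat, Tmat, mmul. cbn [ma mb mc md].
    rewrite Ha, Hb, Hc, Hd. unfold lam. fold (th p).
    pose proof (sn_rec p (INR k + 1)). pose proof (sn_rec p (INR k)).
    replace (INR k + 1 + 1) with (INR k + 1 + 1) in * by ring.
    replace (INR k + 1 - 1) with (INR k) in * by ring.
    repeat split; apply Rmult_eq_reg_r with (sn p 1); try lra;
      field_simplify; try lra; nra.
Qed.

Lemma act0_fin M : md M <> 0 -> act M (Fin 0) = Fin (mb M / md M).
Proof. intro H. unfold act. replace (mc M * 0 + md M) with (md M) by ring.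
  destruct (Req_EM_T (md M) 0); [contradiction|]. f_equal. field_simplify; auto. Qed.

Lemma act0_inf M : md M = 0 -> act M (Fin 0) = Inf.
Proof. intro H. unfold act. replace (mc M * 0 + md M) with (md M) by ring.
  destruct (Req_EM_T (md M) 0); [reflexivity|contradiction]. Qed.

Lemma actT_fin M x : ma M * x + mb M <> 0 ->
  act (mmul Tmat M) (Fin x) = Fin ((- mc M * x - md M) / (ma M * x + mb M)).
Proof. intro H. unfold act, mmul, Tmat. cbn [ma mb mc md].
  replace ((1 * ma M + 0 * mc M) * x + (1 * mb M + 0 * md M)) with (ma M * x + mb M) by ring.
  destruct (Req_EM_T (ma M * x + mb M) 0); [contradiction|]. f_equal. f_equal. ring. Qed.

Lemma actT_fin0 M x : ma M * x + mb M = 0 -> act (mmul Tmat M) (Fin x) = Inf.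
Proof. intro H. unfold act, mmul, Tmat. cbn [ma mb mc md].
  replace ((1 * ma M + 0 * mc M) * x + (1 * mb M + 0 * md M)) with (ma M * x + mb M) by ring.
  destruct (Req_EM_T (ma M * x + mb M) 0); [reflexivity|contradiction]. Qed.

Lemma actT_inf M : ma M <> 0 -> act (mmul Tmat M) Inf = Fin (- mc M / ma M).
Proof. intro H. unfold act, mmul, Tmat. cbn [ma mb mc md].
  replace (1 * ma M + 0 * mc M) with (ma M) by ring.
  destruct (Req_EM_T (ma M) 0); [contradiction|]. f_equal. f_equal. ring. Qed.

Lemma actT_inf0 M : ma M = 0 -> act (mmul Tmat M) Inf = Inf.
Proof. intro H. unfold act, mmul, Tmat. cbn [ma mb mc md].
  replace (1 * ma M + 0 * mc M) with (ma M) by ring.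
  destruct (Req_EM_T (ma M) 0); [reflexivity|contradiction]. Qed.

Lemma div_le_iff b c x : 0 < b -> (c / b <= x <-> c <= b * x).
Proof. intro H. split; intro H1.
  - apply Rmult_le_compat_l with (r := b) in H1; [|lra].
    replace (b * (c / b)) with c in H1 by (field; lra). exact H1.
  - apply Rmult_le_reg_l with b; [exact H|]. replace (b * (c / b)) with c by (field; lra). exact H1. Qed.

Lemma div_gt_iff b c x : 0 < b -> (x < c / b <-> b * x < c).
Proof. intro H. split; intro H1.
  - apply Rmult_lt_compat_l with (r := b) in H1; [|lra].
    replace (b * (c / b)) with c in H1 by (field; lra). exact H1.
  - apply Rmult_lt_reg_l with b; [exact H|]. replace (b * (c / b)) with c by (field; lra). exact H1. Qed.

Theorem lemma1p1 (p : nat) (Hp : (3 <= p)%nat) (alpha : PR) (i : nat)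
  (Hi1 : (1 <= i)%nat) (Hi2 : (i <= p - 1)%nat) :
  (in_Ico (act (mpow (Umat p) (p - i + 1)) (Fin 0))
          (act (mpow (Umat p) (p - i)) (Fin 0)) alpha
   <-> in_Ico (Fin 0) Inf (act (mmul Tmat (mpow (Umat p) i)) alpha))
  /\
  (alpha = act (mpow (Umat p) (p - i + 1)) (Fin 0)
   <-> act (mmul Tmat (mpow (Umat p) i)) alpha = Fin 0).
Proof.
  pose proof (INR_p_pos p Hp) as HP.
  assert (Hs : 0 < sn p 1) by (apply sn_pos; [exact Hp|lra|lra]).
  assert (Hi : 1 <= INR i <= INR p - 1).
  { split. apply le_INR in Hi1; simpl in Hi1; lra.
    assert (i + 1 <= p)%nat by lia. apply le_INR in H. rewrite plus_INR in H. simpl in H. lra. }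
  set (A := sn p (INR i + 1)). set (B := sn p (INR i)). set (C := sn p (INR i - 1)).
  assert (HB : 0 < B) by (apply sn_pos; [exact Hp|lra|lra]).
  assert (HC : 0 <= C).
  { destruct (Req_dec (INR i) 1) as [E|E].
    - unfold C, sn. rewrite E. replace ((1-1) * th p) with 0 by ring. rewrite sin_0. lra.
    - apply Rlt_le. apply sn_pos; [exact Hp|lra|lra]. }
  assert (HA : 0 <= A /\ (A = 0 <-> i = (p - 1)%nat)).
  { destruct (Nat.eq_dec i (p-1)) as [E|E].
    - assert (INR i + 1 = INR p). { rewrite E, minus_INR by lia. simpl. ring. }
      unfold A, sn. rewrite H, th_mul, sin_PI by exact Hp. split; [lra|tauto].
    - assert (INR i + 1 < INR p).
      { assert (i + 1 < p)%nat by lia. apply lt_INR in H. rewrite plus_INR in H. simpl in H. lra. }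
      assert (0 < A) by (apply sn_pos; [exact Hp|lra|lra]). split; [lra|]. split; [lra|tauto]. }
  assert (HACB : A * C < B * B).
  { unfold A, C, B. rewrite sn_prod. nra. }
  destruct (mpow_U p i Hp) as [Ua [Ub [Uc Ud]]].
  fold A B in Ua, Ub, Uc. fold C in Ud.
  assert (EL : act (mpow (Umat p) (p - i + 1)) (Fin 0) = Fin (C / B)).
  { destruct (mpow_U p (p - i + 1) Hp) as [_ [Lb [_ Ld]]].
    rewrite plus_INR, minus_INR in Lb, Ld by lia. simpl in Lb, Ld.
    replace (INR p - INR i + 1) with (INR p - (INR i - 1)) in Lb by ring.
    replace (INR p - INR i + 1 - 1) with (INR p - INR i) in Ld by ring.
    rewrite sn_refl in Lb, Ld by exact Hp. fold C in Lb. fold B in Ld.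
    assert (- B / sn p 1 <> 0) by (apply Rlt_not_eq; apply Rdiv_neg_pos; lra).
    rewrite act0_fin; rewrite Ld; auto.
    rewrite Lb. f_equal. field. lra. }
  assert (ER : (A = 0 /\ act (mpow (Umat p) (p - i)) (Fin 0) = Inf) \/
               (0 < A /\ act (mpow (Umat p) (p - i)) (Fin 0) = Fin (B / A))).
  { destruct (mpow_U p (p - i) Hp) as [_ [Lb [_ Ld]]].
    rewrite minus_INR in Lb, Ld by lia.
    replace (INR p - INR i - 1) with (INR p - (INR i + 1)) in Ld by ring.
    rewrite sn_refl in Lb, Ld by exact Hp. fold A in Ld. fold B in Lb.
    destruct (Req_dec A 0) as [Z|Z].
    - left. split; auto. apply act0_inf. rewrite Ld, Z. field. lra.
    - right. split; [lra|]. assert (- A / sn p 1 <> 0) by (apply Rlt_not_eq; apply Rdiv_neg_pos; lra).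
      rewrite act0_fin; rewrite Ld; auto.
      rewrite Lb. f_equal. field. lra. }
  assert (HTf : forall x, A * x - B = 0 -> act (mmul Tmat (mpow (Umat p) i)) (Fin x) = Inf).
  { intros x Hx. apply actT_fin0. rewrite Ua, Ub.
    replace (A / sn p 1 * x + - B / sn p 1) with ((A * x - B) / sn p 1) by (field; lra).
    rewrite Hx. field. lra. }
  assert (HTf' : forall x, A * x - B <> 0 ->
     act (mmul Tmat (mpow (Umat p) i)) (Fin x) = Fin ((C - B * x) / (A * x - B))).
  { intros x Hx. rewrite actT_fin; rewrite Ua, Ub.
    - rewrite Uc, Ud. f_equal. field. lra.
    - replace (A / sn p 1 * x + - B / sn p 1) with ((A * x - B) / sn p 1) by (field; lra).
      intro Z. apply Hx. apply Rmult_eq_reg_r with (/ sn p 1).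
      rewrite Rmult_0_l. exact Z. apply Rinv_neq_0_compat. lra. }
  assert (HTi : (A = 0 /\ act (mmul Tmat (mpow (Umat p) i)) Inf = Inf) \/
                (0 < A /\ act (mmul Tmat (mpow (Umat p) i)) Inf = Fin (- B / A))).
  { destruct HA as [HA0 _]. destruct (Req_dec A 0) as [Z|Z].
    - left. split; auto. apply actT_inf0. rewrite Ua, Z. field. lra.
    - right. split; [lra|]. rewrite actT_inf.
      + rewrite Ua, Uc. f_equal. field. lra.
      + rewrite Ua. intro Z'. apply Z. apply Rmult_eq_reg_r with (/ sn p 1).
        rewrite Rmult_0_l. exact Z'. apply Rinv_neq_0_compat. lra. }
  destruct HA as [HA0 _].
  rewrite EL.
  destruct alpha as [x|].
  - destruct (Req_dec (A * x - B) 0) as [D|D].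
    + rewrite (HTf x D). split; [|split; [intro Q; injection Q; intro; subst x | discriminate]].
      * destruct ER as [[E1 E2]|[E1 E2]]; rewrite E2; simpl; split; try tauto.
        -- intros _. rewrite E1 in D. lra.
        -- intros [_ Q]. assert (x = B / A) by (assert (x = (A*x)/A) by (field; lra); rewrite H; f_equal; lra). lra.
      * exfalso. assert (A * C - B * B = 0) by (apply Rmult_eq_reg_r with (/B); [rewrite Rmult_0_l; rewrite <- D; field; lra | apply Rinv_neq_0_compat; lra]). lra.
    + rewrite (HTf' x D). set (q := (C - B * x) / (A * x - B)).
      assert (Hq : q * (A * x - B) = C - B * x) by (unfold q; field; exact D).
      split.
      * destruct ER as [[E1 E2]|[E1 E2]]; rewrite E2; simpl.
        -- rewrite E1 in Hq, D. split.
           ++ intros [H1 _]. split; [|exact I].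
              apply div_le_iff in H1; [|lra]. nra.
           ++ intros [H1 _]. split; [|exact I].
              assert (C - B * x <= 0) by nra.
              apply div_le_iff; lra.
        -- split.
           ++ intros [H1 H2]. split; [|exact I].
              apply div_le_iff in H1; [|lra]. apply div_gt_iff in H2; [|lra].
              nra.
           ++ intros [H1 _].
              destruct (Rlt_dec (A * x - B) 0) as [N|N].
              ** assert (C - B * x <= 0) by nra. split.
                 --- apply div_le_iff; lra.
                 --- apply div_gt_iff; lra.
              ** exfalso. assert (0 < A * x - B) by lra. assert (C - B * x >= 0) by nra.
                 assert (B * B < A * C) by nra. lra.
      * split.
        -- intro Q. injection Q as Q. subst x. f_equal. unfold q.
           replace (C - B * (C / B)) with 0 by (field; lra). unfold Rdiv. ring.
        -- intro Q. injection Q as Q. f_equal. rewrite Q in Hq.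
           assert (HC2 : C = B * x) by lra. rewrite HC2. field. lra.
  - split.
    + split; [simpl; tauto|]. destruct HTi as [[_ E]|[E1 E]]; rewrite E; simpl; [tauto|].
      intros [H1 _]. assert (0 < B / A) by (apply Rdiv_lt_0_compat; lra). lra.
    + split; [discriminate|]. destruct HTi as [[_ E]|[E1 E]]; rewrite E; [discriminate|].
      intro Q. injection Q as Q. assert (0 < B / A) by (apply Rdiv_lt_0_compat; lra). lra.
Qed.
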